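(* Let $T>0$ and let $(X^N)_{N\ge1}$ be a sequence of real-valued stochastic processes with càdlàg paths on $[0,T]$. Suppose that $\sup_{N\ge1}\mathbb E[(X^N(0))^2+(X^N(T))^2]<\infty$, and that there exist $\alpha>1/2$, $\beta>1/2$ and a nondecreasing continuous function $G$ with $G(0)=0$ such that for all $0\le r\le s\le t\le T$, all $N\ge1$ and all $\lambda>0$, $$\mathbb P\big(|X^N(s)-X^N(r)|\wedge|X^N(t)-X^N(s)|\ge\lambda\big)\le\frac{[G(t)-G(r)]^{2\alpha}}{\lambda^{4\beta}}.$$ Then $\sup_{N\ge1}\mathbb E\big[\sup_{0\le t\le T}|X^N(t)|^2\big]<\infty$. *)

(* Defs.v *)
From HB Require Import structures.
From mathcomp Require Import all_boot all_order all_algebra.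
From mathcomp Require Import all_classical all_reals all_analysis.
Set Implicit Arguments. Unset Strict Implicit. Unset Printing Implicit Defensive.
Import Order.TTheory GRing.Theory Num.Theory.
Import numFieldNormedType.Exports.
Local Open Scope classical_set_scope.
Local Open Scope ring_scope.

Definition cadlag_on (R : realType) (T : R) (f : R -> R) : Prop :=
  (forall t, 0 <= t -> t < T -> f x @[x --> t^'+] --> f t) /\
  (forall t, 0 < t -> t <= T -> exists l : R, f x @[x --> t^'-] --> l).

Definition sup_sq_on (R : realType) (T : R) (f : R -> R) : \bar R :=
  ereal_sup [set ((f t) ^+ 2)%:E | t in [set t | 0 <= t <= T]].

(* Main.v *)
Require Import Defs.
From HB Require Import structures.
From mathcomp Require Import all_boot all_order all_algebra.
From mathcomp Require Import all_classical all_reals all_analysis.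
From mathcomp Require Import ring lra zify measurable_realfun.
Import Order.TTheory GRing.Theory Num.Theory.
Import numFieldNormedType.Exports.
Local Open Scope classical_set_scope.
Local Open Scope ring_scope.
Lemma le_integral_nm (R : realType) (d : measure_display) (Omega : measurableType d)
  (P : {measure set Omega -> \bar R}) (f g : Omega -> \bar R) :
  (forall x, (0 <= f x)%E) -> (forall x, (f x <= g x)%E) ->
  (\int[P]_x f x <= \int[P]_x g x)%E.
Proof.
move=> f0 fg.
have g0 : forall x, (0 <= g x)%E by move=> x; exact: le_trans (f0 x) (fg x).
rewrite !ge0_integralE// !patch_setT.
apply: le_ereal_sup => _ [h hf <-]; exists h => //= x.
exact: le_trans (hf x) (fg x).
Qed.
Lemma chain_lemma (R : realType) (q : nat -> nat -> R) (w : nat -> R) :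
  (forall k, 0 <= w k) ->
  (forall k j, q k.+1 j.*2 = q k j) ->
  (forall k j, (j.+2 <= 2 ^ k.+1)%N ->
     Num.min `|q k.+1 j.+1 - q k.+1 j| `|q k.+1 j.+2 - q k.+1 j.+1| <= w k) ->
  forall n j, (j <= 2 ^ n)%N ->
    `|q n j - q 0%N 0%N| <= \sum_(k < n) w k \/ `|q n j - q 0%N 1%N| <= \sum_(k < n) w k.
Proof.
move=> w0 qd qm; elim=> [|n IH] j.
  rewrite expn0 big_ord0; case: j => [|[|//]] _.
    by left; rewrite subrr normr0.
  by right; rewrite subrr normr0.
move=> hj; rewrite big_ord_recr /=.
case: (boolP (odd j)) => [Ho|He].
- have hj' : j = (j./2).*2.+1 by rewrite -[LHS]odd_double_half Ho.
  have hle : ((j./2).*2.+2 <= 2 ^ n.+1)%N.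
    have : (j != 2 ^ n.+1)%N by apply/negP => /eqP E; move: Ho; rewrite E oddX.
    rewrite hj' in hj * => ne.
    have : (2 ^ n.+1 = (2 ^ n).*2)%N by rewrite expnS mul2n.
    move: ne hj; rewrite -!(rwP eqP); lia.
  have := qm n _ hle.
  have -> : (j./2).*2.+2 = (j./2).+1.*2 by rewrite doubleS.
  rewrite -hj' !qd.
  case: (leP `|q n.+1 j - q n (j./2)| `|q n (j./2).+1 - q n.+1 j|) => _ hm.
  + have hj2 : (j./2 <= 2 ^ n)%N.
      have : (2 ^ n.+1 = (2 ^ n).*2)%N by rewrite expnS mul2n.
      move: hj; rewrite {1}hj'; lia.
    case: (IH _ hj2) => H; [left|right].
    * apply: (le_trans (ler_distD (q n j./2) _ _)); rewrite addrC.
      by apply: lerD => //; rewrite distrC.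
    * apply: (le_trans (ler_distD (q n j./2) _ _)); rewrite addrC.
      by apply: lerD => //; rewrite distrC.
  + have hj2 : ((j./2).+1 <= 2 ^ n)%N.
      have : (2 ^ n.+1 = (2 ^ n).*2)%N by rewrite expnS mul2n.
      move: hle; lia.
    case: (IH _ hj2) => H; [left|right].
    * apply: (le_trans (ler_distD (q n (j./2).+1) _ _)); rewrite addrC.
      by apply: lerD => //; rewrite distrC.
    * apply: (le_trans (ler_distD (q n (j./2).+1) _ _)); rewrite addrC.
      by apply: lerD => //; rewrite distrC.
- have hj' : j = (j./2).*2 by rewrite -[LHS]odd_double_half (negbTE He).
  have hj2 : (j./2 <= 2 ^ n)%N.
    have : (2 ^ n.+1 = (2 ^ n).*2)%N by rewrite expnS mul2n.
    move: hj; rewrite {1}hj'; lia.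
  rewrite hj' qd; case: (IH _ hj2) => H; [left|right];
    by rewrite (le_trans H)// lerDl.
Qed.
Lemma sq_bound (R : realType) (x a b : R) :
  x ^+ 2 <= 2 * (a ^+ 2 + b ^+ 2) + 2 * (Num.min `|x - a| `|b - x|) ^+ 2.
Proof.
have h1 := sqr_ge0 (2 * a - x); have h2 := sqr_ge0 (2 * b - x).
have h3 := sqr_ge0 a; have h4 := sqr_ge0 b.
case: (leP `|x - a| `|b - x|) => _; rewrite real_normK ?num_real//; nra.
Qed.

Lemma geo4 (R : realType) n : \sum_(i < n) 3 * (4 : R) ^+ i = 4 ^+ n - 1.
Proof.
elim: n => [|n IH]; first by rewrite big_ord0 expr0 subrr.
rewrite big_ord_recr /= IH exprS. ring.
Qed.

Lemma sq_thr (R : realType) (mu : R) : 0 <= mu -> exists I : nat,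
  mu ^+ 2 <= 1 + \sum_(i < I) 3 * 4 ^+ i * ((2 ^+ i <= mu)%R)%:R.
Proof.
move=> mu0.
suff H : forall I : nat, mu < 2 ^+ I ->
  mu ^+ 2 <= 1 + \sum_(i < I) 3 * 4 ^+ i * ((2 ^+ i <= mu)%R)%:R.
  have [n hn] : exists n : nat, mu < n%:R.
    by exists (Num.trunc mu).+1; case/andP: (truncn_itv mu0).
  exists n; apply: H; rewrite (lt_le_trans hn)//.
  by rewrite -natrX ler_nat ltnW// ltn_expl.
elim=> [|I IH] hI.
  rewrite big_ord0 addr0; rewrite expr0 in hI; nra.
have [hlt|hge] := ltP mu (2 ^+ I).
  rewrite big_ord_recr /= addrA (le_trans (IH hlt))// lerDl.
  by apply: mulr_ge0; [apply: mulr_ge0 => //; exact: exprn_ge0|exact: ler0n].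
rewrite (eq_bigr (fun i : 'I_I.+1 => 3 * 4 ^+ i)); last first.
  move=> i _; have -> : (2 ^+ i <= mu) = true.
    apply: le_trans hge; rewrite ler_eXn2l//; last by lra.
    by rewrite -ltnS.
  by rewrite mulr1.
rewrite geo4 addrC subrK.
have -> : (4 : R) ^+ I.+1 = (2 ^+ I.+1) ^+ 2 by rewrite -exprM mulnC exprM; congr (_ ^+ _); lra.
rewrite lerXn2r ?nnegrE ?exprn_ge0// ltW//.
Qed.
Lemma rc_bound (R : realType) (T : R) (G : R -> R) (f : R -> R)
  (pt : nat -> nat -> R) (B : R) :
  0 < T -> G 0 = 0 ->
  (forall s t, 0 <= s -> s <= t -> t <= T -> G s <= G t) ->
  (forall n j, (j <= 2 ^ n)%N -> 0 <= pt n j <= T /\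
      G (pt n j) + pt n j = (G T + T) * j%:R / 2 ^+ n) ->
  (forall t, 0 <= t -> t < T -> f x @[x --> t^'+] --> f t) ->
  0 <= B ->
  (forall n j, (j <= 2 ^ n)%N -> `|f (pt n j) - f 0| <= B \/ `|f (pt n j) - f T| <= B) ->
  forall t, 0 <= t <= T -> Num.min `|f t - f 0| `|f T - f t| <= B.
Proof.
move=> T0 G0 Gm hpt rc B0 hB t /andP[t0 tT].
have [tT'|tT'] := ltP t T; last first.
  have -> : t = T by apply/eqP; rewrite eq_le tT tT'.
  by rewrite subrr normr0 ge_min B0 orbT.
have GT0 : 0 <= G T by rewrite -G0 Gm// ltW.
set L := G T + T.
have L0 : 0 < L by rewrite /L; lra.
apply/ler_addgt0Pr => e e0.
have := rc t t0 tT'; move/cvgrPdist_lt => /(_ e e0) [r /= r0 H].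
have [n hn] : exists n : nat, L / r < n%:R.
  by exists (Num.trunc (L / r)).+1; case/andP: (truncn_itv (divr_ge0 (ltW L0) (ltW r0))).
have hn2 : L / 2 ^+ n < r.
  rewrite ltr_pdivrMr ?exprn_gt0// -ltr_pdivrMl//.
  by rewrite mulrC (lt_le_trans hn)// -natrX ler_nat ltnW// ltn_expl.
set y := (G t + t) * 2 ^+ n / L.
have Gt0 : 0 <= G t by rewrite -G0 Gm// ltW.
have y0 : 0 <= y.
  apply: divr_ge0; last exact: ltW.
  by apply: mulr_ge0; [rewrite addr_ge0|exact: exprn_ge0].
set j := (Num.trunc y).+1.
have [hj1 hj2] : (Num.trunc y)%:R <= y /\ y < j%:R by case/andP: (truncn_itv y0).
have hyn : y < (2 ^ n)%:R.
  rewrite natrX /y ltr_pdivrMr// [X in _ < X]mulrC ltr_pM2r ?exprn_gt0// /L.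
  by have := Gm t T t0 (ltW tT') (lexx T); lra.
have hj : (j <= 2 ^ n)%N.
  by rewrite /j -(ltr_nat R) (le_lt_trans hj1).
have [/andP[p0 pT] pG] := hpt n j hj.
have L0' : L != 0 by rewrite gt_eqF.
have n0' : (2 : R) ^+ n != 0 by rewrite expf_neq0.
have e1 : G t + t = y * L / 2 ^+ n by rewrite /y; field; rewrite n0' L0'.
have hval : G t + t < G (pt n j) + pt n j.
  rewrite pG e1 ltr_pM2r ?invr_gt0 ?exprn_gt0// [X in _ < X]mulrC ltr_pM2r//.
have ht_lt : t < pt n j.
  rewrite ltNge; apply/negP => hle.
  by have := Gm (pt n j) t p0 hle (ltW tT'); lra.
have hdist : pt n j - t < r.
  have hG := Gm t (pt n j) t0 (ltW ht_lt) pT.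
  have : G (pt n j) + pt n j <= G t + t + L / 2 ^+ n.
    have hj3 : j%:R <= y + 1 by rewrite /j -natr1 lerD2r.
    have h1 : L * j%:R / 2 ^+ n <= L * (y + 1) / 2 ^+ n.
      by rewrite ler_pM2r ?invr_gt0 ?exprn_gt0 // ler_pM2l.
    have h2 : L * (y + 1) / 2 ^+ n = G t + t + L / 2 ^+ n.
      by rewrite /y; field; rewrite ?n0' ?L0'.
    by rewrite pG -h2.
  move: hn2; set z := L / 2 ^+ n; lra.
have hf : `|f t - f (pt n j)| < e.
  by apply: H => //=; rewrite ltr0_norm ?subr_lt0// opprB.
case: (hB n j hj) => hb.
- rewrite ge_min; apply/orP; left.
  rewrite (le_trans (ler_distD (f (pt n j)) _ _))// addrC lerD// ltW//.
- rewrite ge_min; apply/orP; right.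
  rewrite (le_trans (ler_distD (f (pt n j)) _ _))// lerD ?(distrC (f T)) // ltW// distrC//.
Qed.
Lemma cont_Gid (R : realType) (T : R) (G : R -> R) :
  {within [set t | 0 <= t <= T], continuous G} ->
  {within `[0, T], continuous (fun t => G t + t)}.
Proof.
move=> hG.
have -> : `[0, T]%classic = [set t | 0 <= t <= T].
  by apply/seteqP; split => x /=; rewrite in_itv.
move=> x; apply: cvgD; first exact: hG.
exact: incl_subspace_continuous.
Qed.

Lemma grid_ex (R : realType) (T : R) (G : R -> R) :
  0 < T -> G 0 = 0 ->
  (forall s t, 0 <= s -> s <= t -> t <= T -> G s <= G t) ->
  {within [set t | 0 <= t <= T], continuous G} ->
  exists pt : nat -> nat -> R,
    [/\ (forall n j, (j <= 2 ^ n)%N -> 0 <= pt n j <= T /\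
            G (pt n j) + pt n j = (G T + T) * j%:R / 2 ^+ n),
        (forall k j, pt k.+1 j.*2 = pt k j),
        pt 0%N 0%N = 0, pt 0%N 1%N = T &
        (forall n j j', (j <= j')%N -> (j' <= 2 ^ n)%N -> pt n j <= pt n j')].
Proof.
move=> T0 G0 Gm hG.
set L := G T + T.
have GT0 : 0 <= G T by rewrite -G0 Gm// ltW.
have L0 : 0 < L by rewrite /L; lra.
have ex : forall v, 0 <= v <= L -> exists t, 0 <= t <= T /\ G t + t = v.
  move=> v hv.
  have := @IVT R (fun t => G t + t) 0 T v (ltW T0) (@cont_Gid R T G hG).
  rewrite G0 add0r ge_min le_max /= -/L.
  case/andP: hv => v0 vL; rewrite v0 vL !orbT /= => /(_ isT) [c].
  by rewrite in_itv /= => hc <-; exists c.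
pose pv v := xget 0 [set t | 0 <= t <= T /\ G t + t = v].
pose pt n j := pv (L * j%:R / 2 ^+ n).
have hpt : forall n j, (j <= 2 ^ n)%N -> 0 <= pt n j <= T /\
            G (pt n j) + pt n j = L * j%:R / 2 ^+ n.
  move=> n j hj; apply: (xgetPex 0 (P := [set t | 0 <= t <= T /\ G t + t = _])).
  apply: ex; apply/andP; split.
    by apply: divr_ge0; [apply: mulr_ge0; [exact: ltW|exact: ler0n]|exact: exprn_ge0].
  rewrite ler_pdivrMr ?exprn_gt0// ler_pM2l// -natrX ler_nat//.
have smono : forall x y, 0 <= x -> x < y -> y <= T -> G x + x < G y + y.
  by move=> x y x0 xy yT; have := Gm x y x0 (ltW xy) yT; lra.
have mono : forall n j j', (j <= j')%N -> (j' <= 2 ^ n)%N -> pt n j <= pt n j'.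
  move=> n j j' jj' j'n.
  have [/andP[a0 aT] aG] := hpt n j (leq_trans jj' j'n).
  have [/andP[b0 bT] bG] := hpt n j' j'n.
  rewrite leNgt; apply/negP => hlt.
  have := smono _ _ b0 hlt aT; rewrite aG bG ltr_pM2r ?invr_gt0 ?exprn_gt0//.
  by rewrite ltr_pM2l// ltr_nat ltnNge jj'.
exists pt; split => //.
- move=> k j; rewrite /pt; congr pv.
  rewrite -mul2n natrM exprS; field.
  by rewrite expf_neq0.
- have [/andP[a0 aT] aG] := hpt 0%N 0%N (leq0n 1).
  rewrite mulr0 mul0r in aG.
  apply/eqP; rewrite eq_le a0 andbT leNgt; apply/negP => hlt.
  by have := smono _ _ (lexx 0) hlt aT; rewrite aG G0 addr0 ltxx.
- have [/andP[a0 aT] aG] := hpt 0%N 1%N (leqnn 1).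
  rewrite expr0 divr1 mulr1 in aG.
  apply/eqP; rewrite eq_le aT /= leNgt; apply/negP => hlt.
  by have := smono _ _ a0 hlt (lexx T); rewrite aG ltxx.
Qed.
Lemma powR_ltr_dec (R : realType) (a p q : R) : 0 < a < 1 -> p < q -> a `^ q < a `^ p.
Proof.
case/andP=> a0 a1 pq; rewrite /powR gt_eqF// ltr_expR.
by rewrite ltr_nM2r// ln_lt0// a0 a1.
Qed.

Lemma powR_ltr_inc (R : realType) (a p q : R) : 1 < a -> p < q -> a `^ p < a `^ q.
Proof.
move=> a1 pq; rewrite /powR gt_eqF ?(lt_trans ltr01)// ltr_expR.
by rewrite ltr_pM2r// ln_gt0.
Qed.

Lemma powR_Xn (R : realType) (a p : R) (k : nat) : 0 <= a -> (a ^+ k) `^ p = (a `^ p) ^+ k.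
Proof.
move=> a0; elim: k => [|k IH]; first by rewrite !expr0 powR1.
by rewrite !exprS powRM ?exprn_ge0// IH.
Qed.

Lemma consts (R : realType) (alpha beta : R) : 1 / 2 < alpha -> 1 / 2 < beta ->
  exists theta : R, [/\ 0 < theta, theta < 1,
    2 * ((1 / 2) `^ (2 * alpha) / theta `^ (4 * beta)) < 1 &
    4 * (2 `^ (4 * beta))^-1 < 1].
Proof.
move=> ha hb.
have h1 : (1 / 2 : R) `^ (2 * alpha) < 1 / 2.
  rewrite -[X in _ < X](@powRr1 _ (1/2)) ?divr_ge0//.
  apply: powR_ltr_dec; first by apply/andP; split; lra.
  lra.
set rho := 2 * (1 / 2 : R) `^ (2 * alpha).
have r0 : 0 < rho by rewrite /rho mulr_gt0// powR_gt0.
have r1 : rho < 1 by rewrite /rho; lra.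
set c := (1 + rho) / 2.
have c0 : 0 < c by rewrite /c; lra.
have c1 : c < 1 by rewrite /c; lra.
have b0 : 0 < beta by lra.
exists (c `^ (1 / (4 * beta))).
have hc : (c `^ (1 / (4 * beta))) `^ (4 * beta) = c.
  have e : 1 / (4 * beta) * (4 * beta) = 1.
    by rewrite mul1r mulVf // gt_eqF // mulr_gt0.
  by rewrite -powRrM e powRr1 ?ltW.
split.
- exact: powR_gt0.
- rewrite ltNge; apply/negP => h.
  have := @ge0_ler_powR R (4 * beta) (ltW (mulr_gt0 (ltr0n _ 4) b0)) 1 _ (ler01) (le_trans ler01 h) h.
  by rewrite powR1 hc; lra.
- rewrite hc mulrA -/rho ltr_pdivrMr// /c; lra.
- rewrite ltr_pdivrMr ?powR_gt0// mul1r.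
  rewrite [X in X < _](_ : 4 = 2 `^ 2%:R); last by rewrite powR_mulrn//; lra.
  by apply: powR_ltr_inc; lra.
Qed.
Lemma geo_partial (R : realType) (a z : R) (n : nat) : 0 <= a -> 0 <= z < 1 ->
  \sum_(0 <= k < n) a * z ^+ k <= a / (1 - z) - a * z ^+ n / (1 - z).
Proof.
move=> a0 /andP[z0 z1]; have hz : 1 - z != 0 by rewrite gt_eqF// subr_gt0.
elim: n => [|n IH]; first by rewrite big_geq// expr0 mulr1 subrr.
rewrite big_nat_recr//= (le_trans (lerD IH (lexx (a * z ^+ n))))//.
have -> : a / (1 - z) - a * z ^+ n / (1 - z) + a * z ^+ n =
   a / (1 - z) - a * z ^+ n.+1 / (1 - z) by rewrite exprS; field.
by [].
Qed.

Lemma eseries_geo (R : realType) (a z : R) : 0 <= a -> 0 <= z < 1 ->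
  (\sum_(n <oo) (a * z ^+ n)%:E <= (a / (1 - z))%:E)%E.
Proof.
move=> a0 hz; apply: lime_le.
  by apply: is_cvg_nneseries => n _ _; rewrite lee_fin mulr_ge0// exprn_ge0//; case/andP: hz.
apply: nearW => n; rewrite sumEFin lee_fin (le_trans (@geo_partial R a z n a0 hz))//.
rewrite lerBlDr lerDl; case/andP: hz => z0 z1.
by rewrite divr_ge0 ?mulr_ge0 ?exprn_ge0// subr_ge0 ltW.
Qed.
Lemma bound_alg (R : realType) (L th alpha beta : R) (i k : nat) : 0 <= L -> 0 < th < 1 ->
  (2 ^ k.+1)%:R * (6 * 4 ^+ i * ((L / 2 ^+ k) `^ (2 * alpha) /
      (2 ^+ i * ((1 - th) / 2 * th ^+ k)) `^ (4 * beta)))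
  = (12 * L `^ (2 * alpha) / ((1 - th) / 2) `^ (4 * beta)) *
    (4 * (2 `^ (4 * beta))^-1) ^+ i *
    (2 * ((1 / 2) `^ (2 * alpha) / th `^ (4 * beta))) ^+ k.
Proof.
move=> L0 /andP[t0 t1].
have e1 : L / 2 ^+ k = L * (1 / 2) ^+ k by rewrite expr_div_n expr1n mulrA mulr1.
have c0 : 0 <= (1 - th) / 2 by apply: divr_ge0 => //; lra.
have t0' : 0 <= th by apply: ltW.
have t1' : 0 <= 1 - th by lra.
rewrite e1 [(L * _) `^ _]powRM ?exprn_ge0// ?divr_ge0//.
rewrite (@powR_Xn R (1/2) (2 * alpha) k) ?divr_ge0//.
rewrite [(2 ^+ i * _) `^ _]powRM ?exprn_ge0 ?mulr_ge0 ?exprn_ge0 //.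
rewrite (@powR_Xn R 2 (4 * beta) i)//.
rewrite [((1 - th) / 2 * _) `^ _]powRM ?exprn_ge0 //.
rewrite (@powR_Xn R th (4 * beta) k) ?ltW//.
set A := L `^ (2 * alpha).
set B := (1 / 2) `^ (2 * alpha).
set p := 2 `^ (4 * beta).
set q := ((1 - th) / 2) `^ (4 * beta).
set r := th `^ (4 * beta).
have p0 : p != 0 by rewrite gt_eqF// powR_gt0.
have q0 : q != 0 by rewrite gt_eqF// powR_gt0//; apply: divr_gt0 => //; lra.
have r0 : r != 0 by rewrite gt_eqF// powR_gt0.
rewrite natrX !exprMn !exprVn.
rewrite (exprSr (2%:R : R)).
have pi0 : p ^+ i != 0 by rewrite expf_neq0.
have rk0 : r ^+ k != 0 by rewrite expf_neq0.
move: pi0 rk0; set pi := p ^+ i; set rk := r ^+ k; set Bk := B ^+ k.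
set tk := (2 : R) ^+ k; set fi := (4 : R) ^+ i => pi0 rk0.
field.
by rewrite pi0 q0 rk0.
Qed.
Lemma pred_pow_lt (j k : nat) : (j.+2 <= 2 ^ k.+1)%N -> (j < (2 ^ k.+1).-1)%N.
Proof. have := expn_gt0 2 k.+1; lia. Qed.

Lemma half_contra (R : realType) (x mu : R) : 0 < x -> x <= mu -> mu <= x / 2 -> False.
Proof. move=> x0 h1 h2; lra. Qed.
Lemma lin3 (R : realType) (x q m z s : R) :
  x <= q + 2 * m -> m <= 1 + z -> 2 * z = s -> x <= q + 2 + s.
Proof. move=> h1 h2 h3; lra. Qed.
Theorem theorem3p1 (R : realType) (d : measure_display) (Omega : measurableType d)
  (P : probability Omega R) (T : R) (X : nat -> R -> Omega -> R)
  (alpha beta : R) (G : R -> R) :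
  0 < T ->
  (forall N t, measurable_fun setT (X N t)) ->
  (forall N omega, (0 < N)%N -> cadlag_on T (fun t => X N t omega)) ->
  (exists C : R, forall N, (0 < N)%N ->
     (\int[P]_omega (((X N 0 omega) ^+ 2 + (X N T omega) ^+ 2)%:E) <= C%:E)%E) ->
  1 / 2 < alpha -> 1 / 2 < beta ->
  (forall s t, 0 <= s -> s <= t -> t <= T -> G s <= G t) ->
  {within [set t | 0 <= t <= T], continuous G} ->
  G 0 = 0 ->
  (forall (r s t : R) (N : nat) (lambda : R),
     0 <= r -> r <= s -> s <= t -> t <= T -> (0 < N)%N -> 0 < lambda ->
     (P [set omega | (lambda <= Num.min `|X N s omega - X N r omega|
                                    `|X N t omega - X N s omega|)%R ]
      <= ((G t - G r) `^ (2 * alpha) / lambda `^ (4 * beta))%:E)%E) ->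
  exists C : R, forall N, (0 < N)%N ->
    (\int[P]_omega sup_sq_on T (fun t => X N t omega) <= C%:E)%E.
Proof.
move=> T0 mX cad [C hC] ha hb Gm Gc G0 hP.
have [pt [hpt hpd hp00 hp01 hpm]] := @grid_ex R T G T0 G0 Gm Gc.
have [th [th0 th1 hy hx]] := @consts R alpha beta ha hb.
have GT0 : 0 <= G T by rewrite -G0 Gm// ltW.
set L := G T + T.
have L0 : 0 < L by rewrite /L; lra.
pose a (k : nat) := (1 - th) / 2 * th ^+ k.
pose thr (i k : nat) := 2 ^+ i * a k.
have thr0 : forall i k, 0 < thr i k.
  move=> i k; rewrite /thr /a; apply: mulr_gt0; first exact: exprn_gt0.
  by apply: mulr_gt0; [apply: divr_gt0; lra|exact: exprn_gt0].
pose m (k : nat) := (2 ^ k.+1).-1.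
pose E (N i k j : nat) := [set w | thr i k <= Num.min
   `|X N (pt k.+1 j.+1) w - X N (pt k.+1 j) w|
   `|X N (pt k.+1 j.+2) w - X N (pt k.+1 j.+1) w|].
pose g (N i k : nat) (w : Omega) := (\sum_(j < m k) (6 * 4 ^+ i * (\1_(E N i k j) w : R))%:E)%E.
pose h (N i : nat) (w : Omega) := (\sum_(k <oo) g N i k w)%E.
pose S (N : nat) (w : Omega) := (\sum_(i <oo) h N i w)%E.
pose A (N : nat) (w : Omega) := ((2 * ((X N 0 w) ^+ 2 + (X N T w) ^+ 2))%:E + 2%:E)%E.
pose D := 12 * L `^ (2 * alpha) / ((1 - th) / 2) `^ (4 * beta).
pose u := 4 * (2 `^ (4 * beta))^-1.
pose v := 2 * ((1 / 2) `^ (2 * alpha) / th `^ (4 * beta)).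
exists (2 * C + 2 + D / (1 - v) / (1 - u)) => N N0.
have mE : forall i k j, measurable (E N i k j).
  move=> i k j.
  have mphi : measurable_fun setT (fun w => Num.min
     `|X N (pt k.+1 j.+1) w - X N (pt k.+1 j) w|
     `|X N (pt k.+1 j.+2) w - X N (pt k.+1 j.+1) w|).
    have md : forall s r, measurable_fun setT (fun w => `|X N s w - X N r w|).
      move=> s r.
      exact: (measurableT_comp (@normr_measurable R setT) (measurable_funB (mX N s) (mX N r))).
    exact: (measurable_minr (md _ _) (md _ _)).
  have := mphi measurableT _ (measurable_itv `[thr i k, +oo[).
  rewrite setTI; congr measurable; apply/seteqP; split => w /=;
    by rewrite in_itv /= andbT.
have g0 : forall i k w, (0 <= g N i k w)%E.
  move=> i k w; apply: sume_ge0 => j _; rewrite lee_fin.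
  by apply: mulr_ge0; [apply: mulr_ge0 => //; exact: exprn_ge0|rewrite indicE; exact: ler0n].
have h0 : forall i w, (0 <= h N i w)%E.
  by move=> i w; apply: nneseries_ge0 => k _ _; exact: g0.
have S0 : forall w, (0 <= S N w)%E.
  by move=> w; apply: nneseries_ge0 => i _ _; exact: h0.
have A0 : forall w, (0 <= A N w)%E.
  move=> w; rewrite /A -EFinD lee_fin; apply: addr_ge0 => //.
  by apply: mulr_ge0 => //; apply: addr_ge0; exact: sqr_ge0.
have mterm : forall i k j, measurable_fun setT
    (fun w => (6 * 4 ^+ i * (\1_(E N i k j) w : R))%:E).
  move=> i k j; apply/measurable_EFinP; apply: measurable_funM.
    exact: measurable_cst.
  exact: measurable_indic.
have mg : forall i k, measurable_fun setT (g N i k).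
  by move=> i k; apply: emeasurable_sum => j; exact: mterm.
have mh : forall i, measurable_fun setT (h N i).
  move=> i.
  exact: (ge0_emeasurable_sum (h := g N i) (P := xpredT) (fun k x _ _ => g0 i k x) (fun k _ => mg i k)).
have mS : measurable_fun setT (S N).
  exact: (ge0_emeasurable_sum (h := h N) (P := xpredT) (fun k x _ _ => h0 k x) (fun k _ => mh k)).
have mphi : measurable_fun setT (fun w => X N 0 w ^+ 2 + X N T w ^+ 2).
  by apply: measurable_funD; apply: measurable_funX; exact: mX.
have m2phi : measurable_fun setT (fun w => 2 * (X N 0 w ^+ 2 + X N T w ^+ 2)).
  by apply: measurable_funM => //; exact: measurable_cst.
have mA : measurable_fun setT (A N).
  apply: emeasurable_funD; first exact/measurable_EFinP.
  exact: measurable_cst.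
have c0 : forall i : nat, 0 <= 6 * 4 ^+ i :> R.
  by move=> i; apply: mulr_ge0 => //; exact: exprn_ge0.
have pw : forall w, (sup_sq_on T (fun t => X N t w) <= A N w + S N w)%E.
  move=> w; rewrite /sup_sq_on; apply: ge_ereal_sup => _ [t /andP[t0 tT] <-].
  set mu := Num.min `|X N t w - X N 0 w| `|X N T w - X N t w|.
  have mu0 : 0 <= mu by rewrite /mu le_min !normr_ge0.
  have key : forall i : nat, 2 ^+ i <= mu -> exists k j, (j < m k)%N /\ E N i k j w.
    move=> i hi; apply: contrapT => hne.
    have hlt : forall k j, (j.+2 <= 2 ^ k.+1)%N ->
        Num.min `|X N (pt k.+1 j.+1) w - X N (pt k.+1 j) w|
                `|X N (pt k.+1 j.+2) w - X N (pt k.+1 j.+1) w| <= thr i k.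
      move=> k j hj; apply: ltW; rewrite ltNge; apply/negP => hge; apply: hne.
      exists k, j; split => //.
      exact: pred_pow_lt.
    have hd : forall k j, X N (pt k.+1 j.*2) w = X N (pt k j) w.
      by move=> k j; rewrite hpd.
    have ch := @chain_lemma R (fun n j => X N (pt n j) w) (thr i)
      (fun k => ltW (thr0 i k)) hd hlt.
    have Bb : forall n, \sum_(k < n) thr i k <= 2 ^+ i / 2.
      move=> n; rewrite -(big_mkord xpredT (thr i)).
      have hz : 0 <= th < 1 by rewrite th1 ltW.
      have ha0 : 0 <= 2 ^+ i * ((1 - th) / 2).
        by apply: mulr_ge0; [exact: exprn_ge0|apply: divr_ge0 => //; lra].
      have h1 := @geo_partial R (2 ^+ i * ((1 - th) / 2)) th n ha0 hz.
      have e2 : \sum_(0 <= k < n) thr i k =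
          \sum_(0 <= k < n) 2 ^+ i * ((1 - th) / 2) * th ^+ k.
        by apply: eq_bigr => k _; rewrite /thr /a mulrA.
      rewrite e2; apply: (le_trans h1).
      have -> : 2 ^+ i * ((1 - th) / 2) / (1 - th) = 2 ^+ i / 2.
        have nz : 1 - th != 0 by rewrite gt_eqF // subr_gt0.
        by field; exact: nz.
      rewrite lerBlDr lerDl; apply: divr_ge0; last by rewrite subr_ge0 ltW.
      by apply: mulr_ge0 => //; apply: exprn_ge0; exact: ltW.
    have B0 : 0 <= 2 ^+ i / 2 :> R by apply: divr_ge0 => //; exact: exprn_ge0.
    have hB : forall n j, (j <= 2 ^ n)%N ->
        `|X N (pt n j) w - X N 0 w| <= 2 ^+ i / 2 \/
        `|X N (pt n j) w - X N T w| <= 2 ^+ i / 2.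
      move=> n j hj; have := ch n j hj; rewrite /= hp00 hp01.
      by case => H; [left|right]; apply: le_trans H (Bb n).
    have := @rc_bound R T G (fun t => X N t w) pt (2 ^+ i / 2) T0 G0 Gm hpt
      (proj1 (cad N w N0)) B0 hB t.
    rewrite t0 tT => /(_ isT) hmu.
    exact: (@half_contra R (2 ^+ i) mu (exprn_gt0 _ _) hi hmu).
  have [I hI] := @sq_thr R mu mu0.
  have hsq := @sq_bound R (X N t w) (X N 0 w) (X N T w).
  rewrite -/mu in hsq.
  pose SS : R := \sum_(i < I) 6 * 4 ^+ i * ((2 ^+ i <= mu)%R)%:R.
  have eSS : 2 * (\sum_(i < I) 3 * 4 ^+ i * ((2 ^+ i <= mu)%R)%:R) = SS.
    by rewrite mulr_sumr; apply: eq_bigr => i _; ring.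
  have hreal := @lin3 R _ _ _ _ _ hsq hI eSS.
  have hS : ((SS)%:E <= S N w)%E.
    rewrite /SS -sumEFin.
    apply: (@le_trans _ _ (\sum_(i < I) h N i w)%E).
      apply: lee_sum => i _.
      case: (boolP (2 ^+ i <= mu)) => hbi; last by rewrite mulr0; exact: h0.
      have [k [j [hj hE]]] := key i hbi.
      rewrite mulr1.
      apply: (@le_trans _ _ (g N i k w)).
        rewrite /g (bigD1 (Ordinal hj)) //= indicE mem_set // mulr1; apply: leeDl.
        apply: sume_ge0 => j' _; rewrite lee_fin.
        by apply: mulr_ge0; [exact: c0|rewrite indicE; exact: ler0n].
      apply: (@le_trans _ _ (\sum_(0 <= k' < k.+1) g N i k' w)%E).
        rewrite big_nat_recr //= addeC; apply: leeDl.
        by apply: sume_ge0 => k' _; exact: g0.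
      exact: (nneseries_lim_ge _ (fun k' _ _ => g0 i k' w)).
    rewrite -(big_mkord xpredT (fun i => h N i w)).
    exact: (nneseries_lim_ge _ (fun i' _ _ => h0 i' w)).
  apply: (@le_trans _ _ ((2 * (X N 0 w ^+ 2 + X N T w ^+ 2) + 2 + SS)%:E)).
    by rewrite lee_fin.
  rewrite (EFinD (2 * (X N 0 w ^+ 2 + X N T w ^+ 2) + 2) SS).
  by apply: leeD.
have sup0 : forall w, (0 <= sup_sq_on T (fun t => X N t w))%E.
  move=> w; rewrite /sup_sq_on.
  apply: (le_trans _ (ereal_sup_ubound (x := ((X N 0 w) ^+ 2)%:E) _)).
    by rewrite lee_fin sqr_ge0.
  by exists 0 => //=; rewrite lexx ltW.
have intA : (\int[P]_w A N w <= (2 * C + 2)%:E)%E.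
  have nn1 : forall x, [set: Omega] x ->
      (0 <= (2 * (X N 0 x ^+ 2 + X N T x ^+ 2))%:E)%E.
    by move=> x _; rewrite lee_fin; apply: mulr_ge0 => //; apply: addr_ge0; exact: sqr_ge0.
  have nn2 : forall x, [set: Omega] x -> (0 <= (X N 0 x ^+ 2 + X N T x ^+ 2)%:E)%E.
    by move=> x _; rewrite lee_fin; apply: addr_ge0; exact: sqr_ge0.
  have mf1 : measurable_fun setT (fun w => (2 * (X N 0 w ^+ 2 + X N T w ^+ 2))%:E).
    exact/measurable_EFinP.
  have mf2 : measurable_fun setT (fun w => (X N 0 w ^+ 2 + X N T w ^+ 2)%:E).
    exact/measurable_EFinP.
  have e := @ge0_integralD d Omega R P setT measurableT
    (fun w => (2 * (X N 0 w ^+ 2 + X N T w ^+ 2))%:E) (fun=> 2%:E).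
  have -> : (\int[P]_w A N w =
     \int[P]_w ((2 * (X N 0 w ^+ 2 + X N T w ^+ 2))%:E + 2%:E))%E by [].
  rewrite e //.
  under eq_integral do rewrite EFinM.
  rewrite ge0_integralZl_EFin//.
  have ic := @integral_cst d Omega R P setT measurableT 2%:E.
  rewrite /= in ic; rewrite ic probability_setT mule1.
  rewrite (EFinD (2 * C) 2) (EFinM 2 C); apply: leeD => //; apply: lee_wpmul2l => //; exact: hC.
have hPE : forall i k j, (j < m k)%N ->
    (P (E N i k j) <= ((L / 2 ^+ k) `^ (2 * alpha) / (thr i k) `^ (4 * beta))%:E)%E.
  move=> i k j hj.
  have hpos := expn_gt0 2 k.+1.
  have hj2 : (j.+2 <= 2 ^ k.+1)%N by move: hj; rewrite /m; lia.
  have [/andP[r0 rT] rG] := hpt k.+1 j (ltnW (ltnW hj2)).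
  have [/andP[s0 sT] sG] := hpt k.+1 j.+1 (ltnW hj2).
  have [/andP[t0 tT] tG] := hpt k.+1 j.+2 hj2.
  have rs := hpm k.+1 j j.+1 (leqnSn j) (ltnW hj2).
  have st := hpm k.+1 j.+1 j.+2 (leqnSn _) hj2.
  apply: le_trans (hP _ _ _ N (thr i k) r0 rs st tT N0 (thr0 i k)) _.
  rewrite lee_fin ler_pM2r ?invr_gt0 ?powR_gt0//.
  have GrGt := Gm _ _ r0 (le_trans rs st) tT.
  apply: ge0_ler_powR; rewrite ?nnegrE.
  - by apply: mulr_ge0 => //; lra.
  - lra.
  - by apply: divr_ge0; [exact: ltW|exact: exprn_ge0].
  have e : L * (j.+2)%:R / 2 ^+ k.+1 - L * j%:R / 2 ^+ k.+1 = L / 2 ^+ k.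
    rewrite -addn2 natrD exprS; field.
    by rewrite expf_neq0.
  move: e tG rG; rewrite -/L.
  set z1 := L * (j.+2)%:R / 2 ^+ k.+1; set z2 := L * j%:R / 2 ^+ k.+1.
  set z3 := L / 2 ^+ k => e tG rG.
  have := le_trans rs st; lra.
have intg : forall i k, (\int[P]_w g N i k w <= (D * u ^+ i * v ^+ k)%:E)%E.
  move=> i k.
  have -> : (\int[P]_w g N i k w =
      \sum_(j < m k) \int[P]_w (6 * 4 ^+ i * (\1_(E N i k j) w : R))%:E)%E.
    have f0 : forall (j : 'I_(m k)) w, [set: Omega] w ->
        (0 <= (6 * 4 ^+ i * (\1_(E N i k j) w : R))%:E)%E.
      move=> j w _; rewrite lee_fin; apply: mulr_ge0 => //; rewrite indicE; exact: ler0n.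
    exact: (@ge0_integral_sum d Omega R P setT measurableT 'I_(m k)
      (fun j w => (6 * 4 ^+ i * (\1_(E N i k j) w : R))%:E) (fun j => mterm i k j) f0
      (index_enum _)).
  have ti : forall j, (\int[P]_w (6 * 4 ^+ i * (\1_(E N i k j) w : R))%:E =
      (6 * 4 ^+ i)%:E * P (E N i k j))%E.
    move=> j; under eq_integral do rewrite EFinM.
    have i0 : forall w, [set: Omega] w -> (0 <= (\1_(E N i k j) w : R)%:E)%E.
      by move=> w _; rewrite lee_fin indicE; exact: ler0n.
    have mi : measurable_fun setT (fun w => (\1_(E N i k j) w : R)%:E).
      by apply/measurable_EFinP; exact: measurable_indic.
    rewrite ge0_integralZl_EFin//.
    by rewrite integral_indic// setIT.
  under eq_bigr do rewrite ti.
  apply: (@le_trans _ _ (\sum_(j < m k) ((6 * 4 ^+ i) *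
       ((L / 2 ^+ k) `^ (2 * alpha) / (thr i k) `^ (4 * beta)))%:E)%E).
    apply: lee_sum => j _; rewrite EFinM.
    have cc : (0 <= (6 * 4 ^+ i)%:E :> \bar R)%E by rewrite lee_fin.
    exact: (lee_wpmul2l cc (hPE i k j (ltn_ord j))).
  rewrite sumEFin lee_fin sumr_const card_ord -[X in X <= _]mulr_natl.
  rewrite /D /u /v -(@bound_alg R L th alpha beta i k (ltW L0)) ?th0 ?th1//.
  rewrite /thr /a; apply: ler_wpM2r.
    apply: mulr_ge0 => //; apply: divr_ge0; first exact: powR_ge0.
    exact: powR_ge0.
  by rewrite ler_nat /m leq_pred.
have D0 : 0 <= D.
  by apply: divr_ge0; [apply: mulr_ge0 => //; exact: powR_ge0|exact: powR_ge0].
have u0 : 0 <= u < 1.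
  by rewrite hx andbT /u mulr_ge0// invr_ge0 powR_ge0.
have v0 : 0 <= v < 1.
  rewrite hy andbT /v mulr_ge0// divr_ge0//; exact: powR_ge0.
have inth : forall i, (\int[P]_w h N i w <= (D * u ^+ i / (1 - v))%:E)%E.
  move=> i.
  have -> : (\int[P]_w h N i w = \sum_(k <oo) \int[P]_w g N i k w)%E.
    exact: (@integral_nneseries d Omega R P setT measurableT (g N i)
      (fun k => mg i k) (fun k x _ => g0 i k x)).
  have Dui : 0 <= D * u ^+ i.
    by apply: mulr_ge0 => //; apply: exprn_ge0; case/andP: u0.
  apply: (le_trans _ (@eseries_geo R (D * u ^+ i) v Dui v0)).
  apply: lee_nneseries.
    by move=> k _ _; apply: integral_ge0 => w _; exact: g0.
  by move=> k _; exact: intg.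
have intS : (\int[P]_w S N w <= (D / (1 - v) / (1 - u))%:E)%E.
  have -> : (\int[P]_w S N w = \sum_(i <oo) \int[P]_w h N i w)%E.
    exact: (@integral_nneseries d Omega R P setT measurableT (h N)
      (fun k => mh k) (fun k x _ => h0 k x)).
  have Dv : 0 <= D / (1 - v).
    by apply: divr_ge0 => //; case/andP: v0 => _ ?; lra.
  apply: (le_trans _ (@eseries_geo R (D / (1 - v)) u Dv u0)).
  apply: lee_nneseries.
    by move=> k _ _; apply: integral_ge0 => w _; exact: h0.
  by move=> i _; rewrite mulrAC; exact: inth.
apply: le_trans (@le_integral_nm R d Omega P _ _ sup0 pw) _.
rewrite ge0_integralD//; first by rewrite EFinD; apply: leeD.
all: by move=> w _; [exact: A0 | exact: S0].
Qed.
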